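(* Let $L:\mathbb{R}^k\to\mathbb{R}^{m+1}$ be a linear map such that $t(L)<t(L_{[m]})$. Then \[ t(L)\leq \max\left\{ \tfrac34\, t(L_{[m]}),\ t(L_{[m]})-2^{k-s-1}\right\},\] where $s=|S(L_{[m]})|$.
   Context: $\mathbb{H}^n=\{0,1\}^n$, $e_1,\dots,e_k$ the standard basis of $\mathbb{R}^k$. For a linear map $L:\mathbb{R}^k\to\mathbb{R}^n$, $t(L)=|L^{-1}(\mathbb{H}^n)\cap\mathbb{H}^k|$ and $S(L)=\{i\in[k]:L(e_i)\neq0\}$. For $A\subseteq[m+1]$, $L_A=\pi_A\circ L:\mathbb{R}^k\to\mathbb{R}^{|A|}$, where $\pi_A$ is the projection onto the coordinates in $A$; in particular $L_{[m]}$ consists of the first $m$ coordinates of $L$. *)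

(* Defs.v *)
From HB Require Import structures.
From mathcomp Require Import all_boot all_order all_algebra.
From mathcomp Require Import reals.
Set Implicit Arguments. Unset Strict Implicit. Unset Printing Implicit Defensive.
Import Order.TTheory GRing.Theory Num.Theory.
Local Open Scope ring_scope.

(* A linear map R^k -> R^n is represented by its matrix L : 'M[R]_(n, k),
   acting on column vectors x : 'cV_k by x |-> L *m x. *)

Definition bvec (R : realType) (k : nat) (b : {ffun 'I_k -> bool}) : 'cV[R]_k :=
  \col_i (b i)%:R.

Definition in_cube (R : realType) (n : nat) (v : 'cV[R]_n) : bool :=
  [forall i, (v i 0 == 0) || (v i 0 == 1)].

Definition tcount (R : realType) (n k : nat) (L : 'M[R]_(n, k)) : nat :=
  #|[set b : {ffun 'I_k -> bool} | in_cube (L *m bvec R b)]|.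

Definition supp (R : realType) (n k : nat) (L : 'M[R]_(n, k)) : {set 'I_k} :=
  [set i : 'I_k | col i L != 0].

Definition firstm (R : realType) (m k : nat) (L : 'M[R]_(m.+1, k)) : 'M[R]_(m, k) :=
  \matrix_(i < m, j < k) L (widen_ord (leqnSn m) i) j.

(* Main.v *)
Require Import Defs.
From HB Require Import structures.
From mathcomp Require Import all_boot all_order all_algebra.
From mathcomp Require Import reals.
From mathcomp Require Import ring lra zify.
Import Order.TTheory GRing.Theory Num.Theory.
Local Open Scope ring_scope.
Set Implicit Arguments. Unset Strict Implicit. Unset Printing Implicit Defensive.

Section Aux.
Variable R : realType.

Definition flip (k : nat) (i : 'I_k) (b : {ffun 'I_k -> bool}) : {ffun 'I_k -> bool} :=
  [ffun x => if x == i then ~~ b x else b x].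

Definition xorset (k : nat) (X : {set 'I_k}) (b : {ffun 'I_k -> bool}) : {ffun 'I_k -> bool} :=
  [ffun x => if x \in X then ~~ b x else b x].

Lemma flipK k (i : 'I_k) : involutive (flip i).
Proof. by move=> b; apply/ffunP => x; rewrite !ffunE; case: eqP => // _; rewrite negbK. Qed.

Lemma mulbvec_row n k (M : 'M[R]_(n, k)) (b b' : {ffun 'I_k -> bool}) r :
  (forall j, b j != b' j -> M r j = 0) ->
  (M *m bvec R b) r 0 = (M *m bvec R b') r 0.
Proof.
move=> H; rewrite !mxE; apply: eq_bigr => j _; rewrite !mxE.
by case: (eqVneq (b j) (b' j)) => [->//|/H ->]; rewrite !mul0r.
Qed.

Lemma mulbvec_flip n k (M : 'M[R]_(n, k)) (b : {ffun 'I_k -> bool}) i r :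
  (M *m bvec R (flip i b)) r 0 =
  (M *m bvec R b) r 0 + M r i * ((~~ b i)%:R - (b i)%:R).
Proof.
rewrite !mxE (bigD1 i) //= [in RHS](bigD1 i) //= !mxE ffunE eqxx.
have -> : \sum_(j < k | j != i) M r j * bvec R (flip i b) j 0 =
          \sum_(j < k | j != i) M r j * bvec R b j 0.
  by apply: eq_bigr => j /negbTE ji; rewrite !mxE ffunE ji.
by rewrite mulrBr; ring.
Qed.

Lemma firstm_mul m k (L : 'M[R]_(m.+1, k)) (v : 'cV[R]_k) (i : 'I_m) :
  (firstm L *m v) i 0 = (L *m v) (widen_ord (leqnSn m) i) 0.
Proof. by rewrite !mxE; apply: eq_bigr => j _; rewrite mxE. Qed.

Lemma four_bad (v a c : R) : a != 0 -> c != 0 ->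
  (v == 0) || (v == 1) -> (v + a == 0) || (v + a == 1) ->
  (v + c == 0) || (v + c == 1) -> (v + a + c == 0) || (v + a + c == 1) -> False.
Proof.
rewrite !neq_lt => /orP[]ha /orP[]hc /orP[]/eqP h1 /orP[]/eqP h2 /orP[]/eqP h3 /orP[]/eqP h4; lra.
Qed.

End Aux.

Theorem lemma4p2 (R : realType) (m k : nat) (L : 'M[R]_(m.+1, k)) :
  (tcount L < tcount (firstm L))%N ->
  (tcount L)%:R <=
    Num.max (3 / 4 * (tcount (firstm L))%:R)
            ((tcount (firstm L))%:R
               - (2 : R) ^ ((k%:Z - (#|supp (firstm L)|)%:Z - 1)%R)).
Proof.
move=> Hlt.
set A := firstm L in Hlt *.
set G := [set b : {ffun 'I_k -> bool} | in_cube (L *m bvec R b)].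
set T := [set b : {ffun 'I_k -> bool} | in_cube (A *m bvec R b)].
have e1 : tcount L = #|G| by [].
have e2 : tcount A = #|T| by [].
rewrite e1 e2 in Hlt *.
set w := fun b : {ffun 'I_k -> bool} => (L *m bvec R b) ord_max 0.
have GT : G \subset T.
  apply/subsetP => b; rewrite !inE => /forallP H; apply/forallP => i.
  by rewrite firstm_mul.
have Gw : forall b, b \in G -> (w b == 0) || (w b == 1).
  by move=> b; rewrite inE => /forallP; apply.
have Aentry : forall i, i \in ~: supp A -> forall r, A r i = 0.
  move=> i; rewrite !inE negbK => /eqP H r.
  by have := congr1 (fun M : 'cV[R]_m => M r 0) H; rewrite !mxE.
have flipT : forall i b, i \in ~: supp A -> (flip i b \in T) = (b \in T).
  move=> i b Hi; rewrite !inE; congr in_cube; apply/matrixP => r c.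
  by rewrite (ord1 c) mulbvec_flip Aentry // mul0r addr0.
set s := #|supp A|.
have sk : (s <= k)%N by rewrite /s -[k in (_ <= k)%N]card_ord max_card.
set F := ~: supp A.
have cardF : #|F| = (k - s)%N.
  have := cardsC (supp A); rewrite card_ord => hk.
  by rewrite -[k in (k - _)%N]hk addKn.
have hexp : (2 : R) ^ ((k%:Z - s%:Z - 1)%R) = 2 ^+ (k - s) / 2.
  rewrite subzn // expfzDr; last by rewrite pnatr_eq0.
  by [].
rewrite hexp.
set N := [set j in F | L ord_max j != 0].
case: (leqP #|N| 1) => HN.
  set Z := [set j | col j L == 0].
  have FZN : F \subset Z :|: N.
    apply/subsetP => j Fj; rewrite in_setU.
    case: (eqVneq (L ord_max j) 0) => h; last first.
      apply/orP; right; rewrite /N in_set; apply/andP; split=> //.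
    apply/orP; left; rewrite inE; apply/eqP/matrixP => r c; rewrite (ord1 c) !mxE.
    case: (unliftP ord_max r) => [r'|] ->; last by [].
    have -> : lift ord_max r' = widen_ord (leqnSn m) r'.
      by apply: val_inj; rewrite /= /bump leqNgt ltn_ord.
    by have := Aentry j Fj r'; rewrite mxE.
  have cardZ : (k - s <= #|Z| + 1)%N.
    rewrite -cardF; apply: leq_trans (subset_leq_card FZN) _; rewrite cardsU.
    by apply: leq_trans (leq_subr _ _) _; rewrite leq_add2l.
  have Zcol : forall j, j \in Z -> forall r, L r j = 0.
    move=> j; rewrite inE => /eqP H r.
    by have := congr1 (fun M : 'cV[R]_m.+1 => M r 0) H; rewrite !mxE.
  have hT : #|T| = (#|G| + #|T :\: G|)%N.
    by have := cardsID G T; rewrite (setIidPr GT).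
  have : (0 < #|T :\: G|)%N by lia.
  case/card_gt0P => b0 Hb0.
  have bad : (2 ^ #|Z| <= #|T :\: G|)%N.
    rewrite -card_powerset.
    have inj : {in powerset Z &, injective (fun X => xorset X b0)}.
      move=> X Y _ _ /ffunP H; apply/setP => x; have := H x; rewrite !ffunE.
      by case: (x \in X); case: (x \in Y); case: (b0 x).
    rewrite -(card_in_imset inj); apply: subset_leq_card; apply/subsetP => _ /imsetP[X XZ ->].
    rewrite inE in XZ.
    have eqL : L *m bvec R (xorset X b0) = L *m bvec R b0.
      apply/matrixP => r c; rewrite (ord1 c); apply: mulbvec_row => j; rewrite ffunE.
      case: ifP => jX; last by rewrite eqxx.
      by move=> _; apply: Zcol; apply: (subsetP XZ).
    have eqA : A *m bvec R (xorset X b0) = A *m bvec R b0.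
      apply/matrixP => r c; rewrite (ord1 c); apply: mulbvec_row => j; rewrite ffunE.
      case: ifP => jX; last by rewrite eqxx.
      by move=> _; rewrite mxE; apply: Zcol; apply: (subsetP XZ).
    by move: Hb0; rewrite !inE eqL eqA.
  have h2 : (2 ^ (k - s) <= 2 * #|T :\: G|)%N.
    apply: leq_trans (leq_pexp2l (isT : (0 < 2)%N) cardZ) _.
    by rewrite expnD mulnC leq_mul2l.
  have h2R : (2 : R) ^+ (k - s) <= 2 * (#|T :\: G|)%:R.
    by rewrite -natrX -natrM ler_nat.
  rewrite le_max; apply/orP; right.
  rewrite hT natrD.
  move: h2R; set x := (2 : R) ^+ (k - s); move=> h2R; lra.
case/card_gt1P: HN => i [j [Ni Nj ij]].
move: Ni Nj; rewrite in_set => /andP[Fi li]; rewrite in_set => /andP[Fj lj].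
set g := fun b => nat_of_bool (b \in G).
have nT : forall b, b \notin T -> g b = 0%N.
  move=> b bT; rewrite /g; case: (boolP (b \in G)) => // bG.
  by move: bT; rewrite (subsetP GT).
have key : forall b, (g b + g (flip i b) + g (flip j b) + g (flip i (flip j b)) <= 3 * (b \in T))%N.
  move=> b; case: (boolP (b \in T)) => bT; last first.
    rewrite !nT //; by rewrite ?flipT.
  have nall : ~~ [&& b \in G, flip i b \in G, flip j b \in G & flip i (flip j b) \in G].
    apply/negP => /and4P[g1 g2 g3 g4].
    have sgn : forall c : bool, (~~ c)%:R - (c%:R) != 0 :> R.
      by case; rewrite /= ?subr0 ?sub0r ?oppr_eq0 oner_eq0.
    apply: (@four_bad R (w b) (L ord_max i * ((~~ b i)%:R - (b i)%:R))
                       (L ord_max j * ((~~ b j)%:R - (b j)%:R))).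
    - by rewrite mulf_neq0.
    - by rewrite mulf_neq0.
    - exact: Gw.
    - by have := Gw _ g2; rewrite /w mulbvec_flip.
    - by have := Gw _ g3; rewrite /w mulbvec_flip.
    - have := Gw _ g4; rewrite /w !mulbvec_flip.
      have -> : flip j b i = b i by rewrite ffunE (negbTE ij).
      by rewrite addrAC.
  move: nall; rewrite /g /=.
  by case: (b \in G); case: (flip i b \in G); case: (flip j b \in G);
     case: (flip i (flip j b) \in G).
have sumG : (\sum_b g b = #|G|)%N.
  rewrite -sum1_card [RHS]big_mkcond /=; apply: eq_bigr => b _; rewrite /g.
  by case: (b \in G).
have s1 : (\sum_b g (flip i b) = \sum_b g b)%N.
  by rewrite [RHS](reindex_inj (inv_inj (flipK i))).
have s2 : (\sum_b g (flip j b) = \sum_b g b)%N.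
  by rewrite [RHS](reindex_inj (inv_inj (flipK j))).
have s3 : (\sum_b g (flip i (flip j b)) = \sum_b g b)%N.
  by rewrite [RHS](reindex_inj (inj_comp (inv_inj (flipK i)) (inv_inj (flipK j)))).
have sumT : (\sum_b 3 * (b \in T) = 3 * #|T|)%N.
  rewrite -big_distrr /= -sum1_card [in RHS]big_mkcond /=.
  by congr (_ * _)%N; apply: eq_bigr => b _; case: (b \in T).
have := @leq_sum _ (index_enum {ffun 'I_k -> bool}) (fun _ => true) _ _ (fun b _ => key b).
have sumT' : (\sum_b nat_of_bool (b \in T) = #|T|)%N.
  rewrite -sum1_card [RHS]big_mkcond /=; apply: eq_bigr => b _.
  by case: (b \in T).
rewrite !big_split /= s1 s2 s3 sumG sumT' big1 // => h4.
have h4R : 4 * (#|G|)%:R <= 3 * (#|T|)%:R :> R.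
  have : ((4 * #|G|)%N)%:R <= ((3 * #|T|)%N)%:R :> R by rewrite ler_nat; lia.
  by rewrite !natrM.
rewrite le_max; apply/orP; left; lra.
Qed.
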